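(* Let $X_1,\dots,X_n$ be mild $E\mathcal M$-simplicial sets. Then the natural map $\Phi\colon E\mathrm{Inj}(n\times\omega,\omega)\times_{E\mathcal M^n}X_1\times\dots\times X_n\to X_1\times\dots\times X_n$ has image exactly the unbiased box product $X_1\boxtimes\dots\boxtimes X_n$ and is an isomorphism onto it.
   Context: $\omega=\{1,2,3,\dots\}$, $\mathcal M$ the monoid of injections $\omega\to\omega$; for $A\subset\omega$, $\mathcal M_A$ is the submonoid of injections fixing $A$ elementwise; $A$ is co-infinite if $\omega\setminus A$ is infinite. $E\mathcal M$ is the simplicial monoid with $(E\mathcal M)_n=\mathcal M^{1+n}$, pointwise multiplication, structure maps by precomposition in $\{0,\dots,n\}$. For an $E\mathcal M$-simplicial set $X$, $x\in X_n$ is $k$-supported on $A$ ($0\le k\le n$) if $i_k(u).x=x$ for all $u\in\mathcal M_A$, with $i_k\colon\mathcal M\to\mathcal M^{1+n}$ the inclusion of the $(1+k)$-th factor. $X$ is mild if each simplex $x\in X_n$ is, for each $k$, $k$-supported on some co-infinite set. The unbiased box product $X_1\boxtimes\dots\boxtimes X_n\subset X_1\times\dots\times X_n$ consists in degree $m$ of those $(x_1,\dots,x_n)$ such that for each $0\le k\le m$ there are pairwise disjoint $A_k^{(1)},\dots,A_k^{(n)}\subset\omega$ with $\bigcup_iA_k^{(i)}$ co-infinite and $x_i$ $k$-supported on $A_k^{(i)}$. $E\mathrm{Inj}(n\times\omega,\omega)$ has $m$-simplices the tuples $(f_0,\dots,f_m)$ of injections $n\times\omega\to\omega$. The quotient $E\mathrm{Inj}(n\times\omega,\omega)\times_{E\mathcal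 M^n}X_1\times\dots\times X_n$ of $E\mathrm{Inj}(n\times\omega,\omega)\times X_1\times\dots\times X_n$ is by the equivalence relation generated on $m$-simplices by $(f_0,\dots,f_m;u_1.x_1,\dots,u_n.x_n)\sim(f_0\circ(u_1^{(0)}\amalg\dots\amalg u_n^{(0)}),\dots,f_m\circ(u_1^{(m)}\amalg\dots\amalg u_n^{(m)});x_1,\dots,x_n)$ for $u_i=(u_i^{(0)},\dots,u_i^{(m)})\in(E\mathcal M)_m$; $E\mathcal M$ acts by postcomposition. $\Phi[f_0,\dots,f_m;x_1,\dots,x_n]=((f_0\iota_1,\dots,f_m\iota_1).x_1,\dots,(f_0\iota_n,\dots,f_m\iota_n).x_n)$ with $\iota_j(t)=(j,t)$. *)

(* Defs.v *)
From Stdlib Require Import Relations.Relation_Operators.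
From mathcomp Require Import all_boot.
Set Implicit Arguments. Unset Strict Implicit. Unset Printing Implicit Defensive.

(* omega is modelled by nat (a relabelling of {1,2,3,...}). *)

Record Minj := MInj { mfun :> nat -> nat ; minj : injective mfun }.

Definition mone : Minj := @MInj id (@inj_id nat).

Definition mmul (u v : Minj) : Minj :=
  @MInj (mfun u \o mfun v) (inj_comp (@minj u) (@minj v)).

Record dmor (m n : nat) := DMor {
  dfun :> 'I_m.+1 -> 'I_n.+1 ;
  dmono : [forall i : 'I_m.+1, forall j : 'I_m.+1, (i <= j) ==> (dfun i <= dfun j)] }.

Lemma did_mono n : [forall i : 'I_n.+1, forall j : 'I_n.+1, (i <= j) ==> (id i <= id j)].
Proof. by apply/forallP => i; apply/forallP => j; apply/implyP. Qed.

Definition did n : dmor n n := DMor (@did_mono n).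

Lemma dcomp_mono m n p (b : dmor n p) (a : dmor m n) :
  [forall i : 'I_m.+1, forall j : 'I_m.+1, (i <= j) ==> ((b \o a) i <= (b \o a) j)].
Proof.
apply/forallP => i; apply/forallP => j; apply/implyP => hij /=.
have /forallP/(_ i)/forallP/(_ j)/implyP ha := dmono a.
have /forallP/(_ (a i))/forallP/(_ (a j))/implyP hb := dmono b.
exact: hb (ha hij).
Qed.

Definition dcomp m n p (b : dmor n p) (a : dmor m n) : dmor m p := DMor (@dcomp_mono m n p b a).

(** E M-simplicial sets: simplicial sets X with, in degree n, an action of
    (EM)_n = M^{1+n} (pointwise multiplication), compatible with the
    structure maps ((EM)(a) is precomposition with a). *)
Record EMsSet := {
  obj :> nat -> Type ;
  smap : forall m n, dmor m n -> obj n -> obj m ;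
  smap_id : forall n (x : obj n), smap (did n) x = x ;
  smap_comp : forall m n p (b : dmor n p) (a : dmor m n) (x : obj p),
      smap (dcomp b a) x = smap a (smap b x) ;
  act : forall n, ('I_n.+1 -> Minj) -> obj n -> obj n ;
  act_one : forall n (x : obj n), act (fun _ => mone) x = x ;
  act_mul : forall n (u v : 'I_n.+1 -> Minj) (x : obj n),
      act (fun k => mmul (u k) (v k)) x = act u (act v x) ;
  act_smap : forall m n (a : dmor m n) (u : 'I_n.+1 -> Minj) (x : obj n),
      smap a (act u x) = act (fun k => u (a k)) (smap a x) }.

Definition incl n (k : 'I_n.+1) (u : Minj) : 'I_n.+1 -> Minj :=
  fun j => if j == k then u else mone.

Definition supported (X : EMsSet) n (x : X n) (k : 'I_n.+1) (A : nat -> Prop) :=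
  forall u : Minj, (forall a, A a -> u a = a) -> @act X _ (incl k u) x = x.

Definition coinfinite (A : nat -> Prop) := forall N, exists a, N <= a /\ ~ A a.

Definition mild (X : EMsSet) :=
  forall n (x : X n) (k : 'I_n.+1), exists A, coinfinite A /\ supported x k A.

Definition inbox r (X : 'I_r -> EMsSet) m (x : forall i, X i m) :=
  forall k : 'I_m.+1, exists A : 'I_r -> nat -> Prop,
    (forall i j a, i <> j -> A i a -> A j a -> False) /\
    coinfinite (fun a => exists i, A i a) /\
    (forall i, supported (x i) k (A i)).

Record Ninj r := NInj { nfun :> 'I_r * nat -> nat ; ninj : injective nfun }.

Lemma restr_inj r (f : Ninj r) (j : 'I_r) : injective (fun t => f (j, t)).
Proof. by move=> s t /(@ninj _ f) [->]. Qed.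

Definition restr r (f : Ninj r) (j : 'I_r) : Minj := MInj (@restr_inj r f j).

Lemma ncomp_inj r (f : Ninj r) (u : 'I_r -> Minj) :
  injective (fun p : 'I_r * nat => f (p.1, u p.1 p.2)).
Proof.
move=> [i s] [j t] /(@ninj _ f) /= [ei]; subst j => /(@minj (u i)) ->; done.
Qed.

Definition ncomp r (f : Ninj r) (u : 'I_r -> Minj) : Ninj r := NInj (@ncomp_inj r f u).

(** m-simplices of E Inj(r x omega, omega) x X_1 x ... x X_r *)
Definition dom r (X : 'I_r -> EMsSet) m : Type :=
  (('I_m.+1 -> Ninj r) * (forall i : 'I_r, X i m))%type.

(** generating relation:
   (f; u_1.x_1, ..., u_r.x_r) ~ (f o (u_1 + ... + u_r); x_1, ..., x_r) *)
Definition genrel r (X : 'I_r -> EMsSet) m (a b : dom X m) : Prop :=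
  exists (F : 'I_m.+1 -> Ninj r) (u : 'I_r -> 'I_m.+1 -> Minj)
         (x : forall i : 'I_r, X i m),
    a = (F, fun i => @act (X i) _ (u i) (x i)) /\
    b = (fun k => ncomp (F k) (fun i => u i k), x).

Definition quotrel r (X : 'I_r -> EMsSet) m : dom X m -> dom X m -> Prop :=
  clos_refl_sym_trans (dom X m) (@genrel r X m).

Definition Phi r (X : 'I_r -> EMsSet) m (a : dom X m) : forall i : 'I_r, X i m :=
  fun i => @act (X i) _ (fun k => restr (a.1 k) i) (a.2 i).

(* Main.v *)
From Stdlib Require Import Relations.Relation_Operators.
From Stdlib Require Import ClassicalEpsilon Classical FunctionalExtensionality ProofIrrelevance.
Require Import Defs.
From mathcomp Require Import all_boot zify.
From Stdlib Require Import Lia.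
Set Implicit Arguments. Unset Strict Implicit. Unset Printing Implicit Defensive.

Definition em (P : Prop) : {P} + {~ P} := excluded_middle_informative P.
Definition cid := constructive_indefinite_description.

Lemma minj_eq (u v : Minj) : (forall z, u z = v z) -> u = v.
Proof.
case: u v => [f hf] [g hg] /= h.
have e : f = g by apply: functional_extensionality.
subst g; by rewrite (proof_irrelevance _ hf hg).
Qed.

Lemma ninj_eq r (u v : Ninj r) : (forall z, u z = v z) -> u = v.
Proof.
case: u v => [f hf] [g hg] /= h.
have e : f = g by apply: functional_extensionality.
subst g; by rewrite (proof_irrelevance _ hf hg).
Qed.

Lemma act_ext (Y : EMsSet) n (u v : 'I_n.+1 -> Minj) (x : Y n) :
  (forall j z, u j z = v j z) -> act u x = act v x.
Proof.
move=> h; have -> : u = v; last by [].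
apply: functional_extensionality => j; apply: minj_eq; exact: h.
Qed.

Lemma act_comp (Y : EMsSet) n (u v : 'I_n.+1 -> Minj) (x : Y n) :
  act u (act v x) = act (fun k => mmul (u k) (v k)) x.
Proof. by rewrite act_mul. Qed.

Definition unbounded (P : nat -> Prop) := forall N, exists a, N <= a /\ P a.

Section Enum.
Variables (P : nat -> Prop) (hP : unbounded P).
Definition pick N := proj1_sig (cid (hP N)).
Lemma pick_ge N : N <= pick N. Proof. by rewrite /pick; case: (cid _) => a [] . Qed.
Lemma pick_P N : P (pick N). Proof. by rewrite /pick; case: (cid _) => a [] . Qed.
Fixpoint enum t := match t with 0 => pick 0 | t'.+1 => pick (enum t').+1 end.
Lemma enum_P t : P (enum t). Proof. by case: t => [|t]; apply: pick_P. Qed.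
Lemma enum_lt t : enum t < enum t.+1. Proof. exact: pick_ge. Qed.
Lemma enum_mono s t : s < t -> enum s < enum t.
Proof.
elim: t => // t IH; rewrite ltnS leq_eqVlt => /orP [/eqP -> | h]; first exact: enum_lt.
exact: ltn_trans (IH h) (enum_lt t).
Qed.
Lemma enum_inj : injective enum.
Proof.
move=> s t e; case: (ltngtP s t) => // h.
  by move: (enum_mono h); rewrite e ltnn.
by move: (enum_mono h); rewrite e ltnn.
Qed.
Lemma enum_ge t : t <= enum t.
Proof. elim: t => [|t IH] //; exact: leq_ltn_trans IH (enum_lt t). Qed.
End Enum.

Lemma coinf_unb A : coinfinite A -> unbounded (fun a => ~ A a).
Proof. by []. Qed.

Lemma evbig (f : nat -> nat) : injective f -> forall N, exists M, forall c, M <= c -> N <= f c.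
Proof.
move=> fi; elim=> [|N [M hM]]; first by exists 0.
case: (classic (exists c0, M <= c0 /\ f c0 = N)) => [[c0 [h1 h2]]|hn].
- exists (maxn M c0.+1) => c; rewrite geq_max => /andP [h3 h4].
  have := hM c h3; rewrite leq_eqVlt => /orP [/eqP e|//].
  have : c = c0 by apply: fi; rewrite h2.
  by move=> ec; move: h4; rewrite ec ltnn.
- exists M => c h; have := hM c h; rewrite leq_eqVlt => /orP [/eqP e|//].
  by exfalso; apply: hn; exists c.
Qed.

Lemma unb_image (f : nat -> nat) (C : nat -> Prop) : injective f -> unbounded C ->
  forall N, exists c, C c /\ N <= f c.
Proof.
move=> fi hC N; have [M hM] := evbig fi N.
have [c [h1 h2]] := hC M; exists c; split => //; exact: hM.
Qed.
Section Agree.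
Variables (Y : EMsSet) (n : nat) (x : Y n) (k : 'I_n.+1) (B : nat -> Prop).
Hypotheses (hB : coinfinite B) (hx : supported x k B).

Let P (a : Minj) := act (incl k a) x.

Lemma P_comp (a w : Minj) : (forall z, B z -> w z = z) -> P (mmul a w) = P a.
Proof.
move=> hw; rewrite /P.
rewrite (@act_ext _ _ _ (fun j => mmul (incl k a j) (incl k w j))); last first.
  by move=> j z; rewrite /incl; case: (j == k).
by rewrite -act_comp hx.
Qed.

Lemma P_D (a b : Minj) : (forall z, B z -> a z = b z) ->
  unbounded (fun c => ~ B c /\ exists y, b y = a c) -> P a = P b.
Proof.
move=> hab hU.
pose e := enum hU.
have eU t : ~ B (e t) /\ exists y, b y = a (e t) by exact: (@enum_P _ hU t).
have ei : injective e := @enum_inj _ hU.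
pose binv v := match em (exists y, b y = v) with left h => proj1_sig (cid h) | right _ => 0 end.
have binvP t : b (binv (a (e t))) = a (e t).
  rewrite /binv; case: (em _) => [h|h]; first by case: (cid h).
  by case: (eU t) => _ /h.
pose f1 z := if em (B z) then z else e z.
pose f2 z := if em (B z) then z else binv (a (e z)).
have f1i : injective f1.
  move=> z z'; rewrite /f1; case: (em (B z)) => hz; case: (em (B z')) => hz' //=.
  - by move=> ee; case: (eU z'); rewrite -ee.
  - by move=> ee; case: (eU z); rewrite ee.
  - exact: ei.
have f2i : injective f2.
  move=> z z'; rewrite /f2; case: (em (B z)) => hz; case: (em (B z')) => hz' //=.
  - move=> ee; have : b z = a (e z') by rewrite ee binvP.
    rewrite -hab // => /(@minj a) ee2; by case: (eU z'); rewrite -ee2.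
  - move=> ee; have : b z' = a (e z) by rewrite -ee binvP.
    rewrite -hab // => /(@minj a) ee2; by case: (eU z); rewrite -ee2.
  - move=> /(congr1 b); rewrite !binvP => /(@minj a); exact: ei.
pose w1 := MInj f1i. pose w2 := MInj f2i.
rewrite -(@P_comp a w1); last by move=> z hz; rewrite /= /f1; case: (em (B z)).
rewrite -(@P_comp b w2); last by move=> z hz; rewrite /= /f2; case: (em (B z)).
congr P; apply: minj_eq => z /=; rewrite /f1 /f2; case: (em (B z)) => hz; first exact: hab.
by rewrite binvP.
Qed.

Lemma P_agree (a b : Minj) : (forall z, B z -> a z = b z) -> P a = P b.
Proof.
move=> hab.
pose e := enum hB.
have eC t : ~ B (e t) by exact: (@enum_P _ hB t).
have ei : injective e := @enum_inj _ hB.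
pose O z := exists t, z = e t.*2.+1.
pose s z := if em (O z /\ ~ exists y, a y = b z) then b z else a z.
have si : injective s.
  move=> z z'; rewrite /s; case: (em (O z /\ _)) => [[hz1 hz2]|hz]; case: (em (O z' /\ _)) => [[hz1' hz2']|hz'] /=.
  - exact: (@minj b).
  - by move=> ee; exfalso; apply: hz2; exists z'.
  - by move=> ee; exfalso; apply: hz2'; exists z.
  - exact: (@minj a).
have sB z : B z -> s z = a z.
  move=> hz; rewrite /s; case: (em _) => //= [[[t et] _]]; by case: (eC t.*2.+1); rewrite -et.
pose sm := MInj si.
have E1 : P sm = P a.
  apply: P_D => [z hz|]; first exact: sB.
  move=> N; exists (e N.*2); split.
    apply: leq_trans (enum_ge hB _); by rewrite -addnn leq_addr.
  split; first exact: eC.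
  exists (e N.*2); rewrite /= /s; case: (em _) => //= [[[t et] _]].
  by move: (ei _ _ et) => /(congr1 odd); rewrite /= !odd_double.
rewrite -E1; case: (classic (unbounded (fun c => ~ B c /\ exists y, a y = b c))) => hU.
  apply/esym; apply: etrans (P_D _ hU) _ => //; by move=> z hz; rewrite hab.
have [N hN] : exists N, forall c, N <= c -> ~ (~ B c /\ exists y, a y = b c).
  apply: NNPP => hn; apply: hU => N; apply: NNPP => hn2; apply: hn; exists N => c hc hc2.
  by apply: hn2; exists c.
apply: P_D => [z hz|]; first by rewrite /= sB // hab.
move=> M; exists (e (N + M).*2.+1); split.
  apply: leq_trans (enum_ge hB _); lia.
split; first exact: eC.
have hc : N <= e (N + M).*2.+1.
  apply: leq_trans (enum_ge hB _); lia.
exists (e (N + M).*2.+1); rewrite /= /s; case: (em _) => //= hn; exfalso; apply: hn; split.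
  by exists (N + M).
by move=> hy; apply: (hN _ hc); split => //; exact: eC.
Qed.

End Agree.
Lemma act_diff1 (Y : EMsSet) n (x : Y n) (k : 'I_n.+1) (B : nat -> Prop) :
  coinfinite B -> supported x k B ->
  forall u v : 'I_n.+1 -> Minj, (forall j, j != k -> forall z, u j z = v j z) ->
  (forall z, B z -> u k z = v k z) -> act u x = act v x.
Proof.
move=> hB hx u v huv hk.
pose r j := if j == k then mone else u j.
have -> : act u x = act r (act (incl k (u k)) x).
  rewrite act_comp; apply: act_ext => j z; rewrite /r /incl; case: eqP => [->|] //.
have -> : act v x = act r (act (incl k (v k)) x).
  rewrite act_comp; apply: act_ext => j z; rewrite /r /incl; case: eqP => [->|/eqP h] //=.
  by rewrite huv.
congr (act r _); exact: P_agree.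
Qed.

Lemma act_agree (Y : EMsSet) n (x : Y n) (u v : 'I_n.+1 -> Minj) :
  (forall l, exists B, coinfinite B /\ supported x l B /\ forall z, B z -> u l z = v l z) ->
  act u x = act v x.
Proof.
move=> h.
pose w (j : nat) := fun l : 'I_n.+1 => if l < j then v l else u l.
have step j : act (w j) x = act (w j.+1) x.
  case: (ltnP j n.+1) => hj.
    have [B [hB [hx hBe]]] := h (Ordinal hj).
    apply: (act_diff1 hB hx) => [l hl z|z hz].
      have hl' : (l : nat) != j by apply: contra hl => /eqP e; apply/eqP/val_inj.
      by rewrite /w ltnS (leq_eqVlt l) (negbTE hl').
    by rewrite /w /= ltnn leqnn; exact: hBe.
  apply: act_ext => l z; rewrite /w.
  have h1 : l < j by exact: leq_trans (ltn_ord l) hj.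
  by rewrite h1 (ltn_trans h1 (ltnSn j)).
have all j : act u x = act (w j) x.
  elim: j => [|j IH]; first by apply: act_ext => l z; rewrite /w.
  by rewrite IH step.
rewrite (all n.+1); apply: act_ext => l z; by rewrite /w ltn_ord.
Qed.

Lemma act_fix (Y : EMsSet) n (x : Y n) (u : 'I_n.+1 -> Minj) :
  (forall l, exists B, coinfinite B /\ supported x l B /\ forall z, B z -> u l z = z) ->
  act u x = x.
Proof.
move=> h; rewrite -{2}(act_one x); apply: act_agree => l.
by have [B [h1 [h2 h3]]] := h l; exists B.
Qed.

Lemma supp_transport (Y : EMsSet) n (x : Y n) (k : 'I_n.+1) (B : nat -> Prop) (u : 'I_n.+1 -> Minj) :
  coinfinite B -> supported x k B ->
  supported (act u x) k (fun z => exists b, B b /\ z = u k b).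
Proof.
move=> hB hx w hw; rewrite act_comp; apply: (act_diff1 hB hx) => [j hj z|z hz].
  by rewrite /incl (negbTE hj).
by rewrite /incl eqxx /=; apply: hw; exists z.
Qed.

Lemma coinf_image (f : nat -> nat) (B : nat -> Prop) : injective f -> coinfinite B ->
  coinfinite (fun z => exists b, B b /\ z = f b).
Proof.
move=> fi hB N; have [c [hc1 hc2]] := unb_image fi hB N.
exists (f c); split => // [[b [hb /fi e]]]; by apply: hc1; rewrite e.
Qed.

Lemma coinf_sub (A A' : nat -> Prop) : coinfinite A -> (forall z, A' z -> A z) -> coinfinite A'.
Proof. move=> h hs N; have [a [h1 h2]] := h N; exists a; split => // /hs; exact: h2. Qed.
Section Greedy.
Variables (r : nat) (f g : Ninj r) (B : 'I_r -> nat -> Prop).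
Hypothesis hB : forall i, coinfinite (B i).

Lemma exists_big (h : Ninj r) i t L : exists d, t <= d /\ ~ B i d /\ L <= h (i, d).
Proof.
have [M hM] := evbig (@restr_inj r h i) L.
have [d [h1 h2]] := hB i (maxn t M).
exists d; split; first by apply: leq_trans h1; exact: leq_maxl.
split => //; apply: (hM d); apply: leq_trans h1; exact: leq_maxr.
Qed.

Definition pickd (h : Ninj r) i t L := proj1_sig (cid (exists_big h i t L)).
Lemma pickdP h i t L : t <= pickd h i t L /\ ~ B i (pickd h i t L) /\ L <= h (i, pickd h i t L).
Proof. by rewrite /pickd; case: (cid _). Qed.

Definition Mst t L := (\max_(i : 'I_r) f (i, pickd f i t L)).+1.
Fixpoint Lseq t := match t with
  | 0 => 0
  | t'.+1 => (\max_(j : 'I_r) g (j, pickd g j t' (Mst t' (Lseq t')))).+1 end.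
Definition d1 i t := pickd f i t (Lseq t).
Definition d2 j t := pickd g j t (Mst t (Lseq t)).

Lemma a1 i t : Lseq t <= f (i, d1 i t). Proof. by case: (pickdP f i t (Lseq t)) => _ []. Qed.
Lemma a2 i t : f (i, d1 i t) < Mst t (Lseq t).
Proof. rewrite /Mst ltnS /d1. exact: leq_bigmax. Qed.
Lemma a3 j t : Mst t (Lseq t) <= g (j, d2 j t).
Proof. by case: (pickdP g j t (Mst t (Lseq t))) => _ []. Qed.
Lemma a4 j t : g (j, d2 j t) < Lseq t.+1.
Proof. rewrite /= ltnS /d2; exact: leq_bigmax. Qed.
Lemma Lstep (i0 : 'I_r) t : Lseq t < Lseq t.+1.
Proof.
apply: leq_ltn_trans (a1 i0 t) _; apply: ltn_trans (a2 i0 t) _.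
exact: leq_ltn_trans (a3 i0 t) (a4 i0 t).
Qed.
Lemma Lmono (i0 : 'I_r) s t : s <= t -> Lseq s <= Lseq t.
Proof.
elim: t => [|t IH]; first by rewrite leqn0 => /eqP ->.
rewrite leq_eqVlt => /orP [/eqP -> //|]; rewrite ltnS => /IH h.
exact: leq_trans h (ltnW (Lstep i0 t)).
Qed.
Lemma V1_lt i t t' : t < t' -> f (i, d1 i t) < f (i, d1 i t').
Proof.
move=> h; have := a1 i t'; have := Lmono i h; have := a2 i t; have := a3 i t; have := a4 i t; lia.
Qed.
Lemma V2_lt j t t' : t < t' -> g (j, d2 j t) < g (j, d2 j t').
Proof.
move=> h; have := a4 j t; have := Lmono j h; have := a1 j t'; have := a2 j t'; have := a3 j t'; lia.
Qed.
Lemma V12_neq i j t t' : f (i, d1 i t) <> g (j, d2 j t').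
Proof.
case: (ltngtP t t') => h.
- have := a3 j t'; have := a2 j t'; have := a1 j t'; have := Lmono i h; have := a4 i t;
  have := a2 i t; have := a3 i t; lia.
- have := a1 i t; have := a4 j t'; have := Lmono i h; lia.
- subst t'; have := a2 i t; have := a3 j t; lia.
Qed.
Lemma d1_inj i : injective (d1 i).
Proof.
move=> t t' e; case: (ltngtP t t') => // h.
  by move: (V1_lt i h); rewrite e ltnn.
by move: (V1_lt i h); rewrite e ltnn.
Qed.
Lemma d2_inj j : injective (d2 j).
Proof.
move=> t t' e; case: (ltngtP t t') => // h.
  by move: (V2_lt j h); rewrite e ltnn.
by move: (V2_lt j h); rewrite e ltnn.
Qed.
Lemma d1_nB i t : ~ B i (d1 i t). Proof. by case: (pickdP f i t (Lseq t)) => _ []. Qed.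
Lemma d2_nB j t : ~ B j (d2 j t). Proof. by case: (pickdP g j t (Mst t (Lseq t))) => _ []. Qed.

Lemma thinmap_inj (d : nat -> nat) (C : nat -> Prop) : injective d -> (forall t, ~ C (d t)) ->
  injective (fun c => if em (C c) then c else d c).
Proof.
move=> di dC z z'; case: (em (C z)) => hz; case: (em (C z')) => hz' //=.
- by move=> e; case: (dC z'); rewrite -e.
- by move=> e; case: (dC z); rewrite e.
- exact: di.
Qed.
Definition w1 i := MInj (thinmap_inj (@d1_inj i) (@d1_nB i)).
Definition w2 i := MInj (thinmap_inj (@d2_inj i) (@d2_nB i)).
End Greedy.
Section Q.
Variables (r : nat) (X : 'I_r -> EMsSet) (m : nat).
Local Notation Q := (@quotrel r X m).
Local Notation tup := ('I_m.+1 -> Ninj r).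
Local Notation elt := (forall i : 'I_r, X i m).

Lemma genrel_q (F : tup) (u : 'I_r -> 'I_m.+1 -> Minj) (x : elt) :
  Q (F, fun i => act (u i) (x i)) (fun k => ncomp (F k) (fun i => u i k), x).
Proof. apply: rst_step; by exists F, u, x. Qed.

Lemma Qtrans a b c : Q a b -> Q b c -> Q a c.
Proof. exact: rst_trans. Qed.
Lemma Qsym a b : Q a b -> Q b a.
Proof. exact: rst_sym. Qed.
Lemma Qrefl a : Q a a.
Proof. exact: rst_refl. Qed.

Definition suppfam (x : elt) (B : 'I_r -> 'I_m.+1 -> nat -> Prop) :=
  forall i k, coinfinite (B i k) /\ supported (x i) k (B i k).

Lemma thin (F : tup) (x : elt) B (hB : suppfam x B) (w : 'I_r -> 'I_m.+1 -> Minj) :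
  (forall i k z, B i k z -> w i k z = z) ->
  Q (F, x) (fun k => ncomp (F k) (fun i => w i k), x).
Proof.
move=> hw; have e : (fun i => act (w i) (x i)) = x.
  apply: functional_extensionality_dep => i; apply: act_fix => l.
  by exists (B i l); have [h1 h2] := hB i l; split; [|split] => // z; apply: hw.
by have := genrel_q F w x; rewrite e.
Qed.

Lemma tup_eq (F G : tup) : (forall k i t, F k (i, t) = G k (i, t)) -> F = G.
Proof. move=> h; apply: functional_extensionality => k; apply: ninj_eq => [[i t]]; exact: h. Qed.

Lemma Ndisj (F G : tup) (x : elt) B (hB : suppfam x B) :
  (forall k i z, B i k z -> F k (i, z) = G k (i, z)) ->
  (forall k i z j z', ~ B i k z -> G k (i, z) <> F k (j, z')) ->
  Q (F, x) (G, x).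
Proof.
move=> hFG hd.
pose eC i k := enum (proj1 (hB i k)).
have eCnB i k t : ~ B i k (eC i k t) by exact: (@enum_P _ (proj1 (hB i k)) t).
have eCi i k : injective (eC i k) := @enum_inj _ (proj1 (hB i k)).
pose Hf k (p : 'I_r * nat) := if odd p.2 then G k (p.1, eC p.1 k p.2./2) else F k (p.1, p.2./2).
have Hinj k : injective (Hf k).
  move=> [i s] [j s']; rewrite /Hf /=.
  have hs := odd_double_half s; have hs' := odd_double_half s'.
  case: (odd s) hs => hs; case: (odd s') hs' => hs'.
  - move/(@ninj _ (G k)) => [eij]; subst j; move/(eCi i k) => e; congr (_, _); by rewrite -hs -hs' e.
  - by move=> e; exfalso; apply: (hd k i _ j _ (eCnB i k _) e).
  - by move=> e; exfalso; apply: (hd k j _ i _ (eCnB j k _) (esym e)).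
  - move/(@ninj _ (F k)) => [eij e]; subst j; congr (_, _); by rewrite -hs -hs' e.
pose H k := NInj (Hinj k).
pose u (i : 'I_r) (k : 'I_m.+1) := MInj double_inj.
have u'i i k : injective (fun t => if em (B i k t) then t.*2 else t.*2.+1).
  move=> t t'; case: (em (B i k t)) => ht; case: (em (B i k t')) => ht' /=.
  - exact: double_inj.
  - by move/(congr1 odd); rewrite /= !odd_double.
  - by move/(congr1 odd); rewrite /= !odd_double.
  - by move=> [] /double_inj.
pose u' i k := MInj (u'i i k).
pose w i k := MInj (thinmap_inj (eCi i k) (eCnB i k)).
have E1 : (fun k => ncomp (H k) (fun i => u i k)) = F.
  by apply: tup_eq => k i t /=; rewrite /Hf /= odd_double doubleK.
have E2 : (fun k => ncomp (H k) (fun i => u' i k)) = (fun k => ncomp (G k) (fun i => w i k)).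
  apply: tup_eq => k i t /=; rewrite /Hf /=; case: (em (B i k t)) => ht /=.
    by rewrite odd_double doubleK hFG.
  by rewrite odd_double /= uphalf_double.
have E3 : (fun i => act (u i) (x i)) = (fun i => act (u' i) (x i)).
  apply: functional_extensionality_dep => i; apply: act_agree => l.
  exists (B i l); have [h1 h2] := hB i l; split; [|split] => // z hz /=.
  by case: (em (B i l z)).
apply: (@Qtrans _ (H, fun i => act (u i) (x i))).
  by apply: Qsym; have := genrel_q H u x; rewrite E1.
rewrite E3; apply: Qtrans; first exact: genrel_q.
rewrite E2; apply: Qsym; apply: (thin _ hB) => i k z hz /=.
by case: (em (B i k z)).
Qed.

Lemma Nagree (F F' : tup) (x : elt) B (hB : suppfam x B) :
  (forall k i z, B i k z -> F k (i, z) = F' k (i, z)) -> Q (F, x) (F', x).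
Proof.
move=> hFF.
have hBk k : forall i, coinfinite (B i k) by move=> i; exact: proj1 (hB i k).
pose W1 i k := w1 (F k) (F' k) (hBk k) i.
pose W2 i k := w2 (F k) (F' k) (hBk k) i.
have W1B i k z : B i k z -> W1 i k z = z by rewrite /W1 /w1 /=; case: (em _).
have W2B i k z : B i k z -> W2 i k z = z by rewrite /W2 /w2 /=; case: (em _).
apply: Qtrans; first exact: (thin F hB W1B).
apply: Qtrans; last exact: (Qsym (thin F' hB W2B)).
apply: (Ndisj hB) => [k i z hz|k i z j z' hz].
  change (F k (i, W1 i k z) = F' k (i, W2 i k z)); by rewrite (W1B _ _ _ hz) (W2B _ _ _ hz) hFF.
change (F' k (i, W2 i k z) <> F k (j, W1 j k z')).
rewrite /W1 /W2 /w1 /w2 /=; case: (em (B i k z)) => //= _.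
case: (em (B j k z')) => hz' /=.
  rewrite (hFF k j z' hz') => /ninj [eij e]; subst j.
  have := d2_nB (f := F k) (g := F' k) (B := fun i0 => B i0 k) (hB := hBk k) (j := i) (t := z); rewrite /= e; exact.
move=> e; exact: (V12_neq (esym e)).
Qed.

End Q.
Section Seq.
Variables (P : nat -> nat -> Prop) (hP : forall t, unbounded (P t)).
Fixpoint sq t := match t with 0 => pick (hP 0) 0 | t'.+1 => pick (hP t'.+1) (sq t').+1 end.
Lemma sq_P t : P t (sq t). Proof. case: t => [|t]; [exact: (pick_P (hP 0)) | exact: (pick_P (hP t.+1))]. Qed.
Lemma sq_lt t : sq t < sq t.+1. Proof. exact: pick_ge. Qed.
Lemma sq_mono s t : s < t -> sq s < sq t.
Proof.
elim: t => // t IH; rewrite ltnS leq_eqVlt => /orP [/eqP -> | h]; first exact: sq_lt.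
exact: ltn_trans (IH h) (sq_lt t).
Qed.
Lemma sq_inj : injective sq.
Proof.
move=> s t e; case: (ltngtP s t) => // h.
  by move: (sq_mono h); rewrite e ltnn.
by move: (sq_mono h); rewrite e ltnn.
Qed.
End Seq.

Definition idx r (p : 'I_r * nat) := p.2 * r + p.1.
Lemma idx_inj r : injective (@idx r).
Proof.
move=> [i s] [j s']; rewrite /idx /= => e.
have hr : 0 < r by case: r i {j e} => [[]|].
have e1 : (s * r + i) %% r = (s' * r + j) %% r by rewrite e.
rewrite !modnMDl !modn_small // in e1.
have e2 : (s * r + i) %/ r = (s' * r + j) %/ r by rewrite e.
rewrite !divnMDl // !divn_small // !addn0 in e2.
have eij : i = j by apply: val_inj; exact: e1.
by rewrite eij e2.
Qed.

Lemma dbl_inj (C : nat -> Prop) : injective (fun t => if em (C t) then t.*2 else t.*2.+1).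
Proof.
move=> t t'; case: (em (C t)) => ht; case: (em (C t')) => ht' /=.
- exact: double_inj.
- by move/(congr1 odd); rewrite /= !odd_double.
- by move/(congr1 odd); rewrite /= !odd_double.
- by move=> [] /double_inj.
Qed.

Lemma union_coinf r (G : Ninj r) (B : 'I_r -> nat -> Prop) : (forall i, coinfinite (B i)) ->
  coinfinite (fun z => exists i, exists b, B i b /\ z = G (i, b)).
Proof.
case: r G B => [|r'] G B hB N.
  by exists N; split => // [[[]]].
have [c [hc1 hc2]] := unb_image (@restr_inj _ G ord0) (hB ord0) N.
exists (G (ord0, c)); split => // [[i [b [hb /ninj [ei ec]]]]].
by subst i; apply: hc1; rewrite ec.
Qed.
Section Parts.
Variables (r : nat) (X : 'I_r -> EMsSet) (m : nat).
Hypothesis hm : forall i, mild (X i).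
Local Notation Q := (@quotrel r X m).
Local Notation tup := ('I_m.+1 -> Ninj r).
Local Notation elt := (forall i : 'I_r, X i m).

Lemma Phi_genrel (F : tup) (u : 'I_r -> 'I_m.+1 -> Minj) (x : elt) :
  Phi ((F, fun i => act (u i) (x i)) : dom X m) = Phi ((fun k => ncomp (F k) (fun i => u i k), x) : dom X m).
Proof.
apply: functional_extensionality_dep => i; rewrite /Phi /= act_comp.
by apply: act_ext.
Qed.

Lemma Phi_quot (a b : dom X m) : Q a b -> Phi a = Phi b.
Proof.
elim => {a b} [a b [F [u [x [-> ->]]]]|a|a b _ ->|a b c _ -> _ ->] //.
exact: Phi_genrel.
Qed.

Lemma part1 (a : dom X m) : inbox (Phi a).
Proof.
case: a => F x k.
pose Bc i := proj1_sig (cid (hm (x i) k)).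
have hBc i : coinfinite (Bc i) /\ supported (x i) k (Bc i) by rewrite /Bc; case: (cid _).
exists (fun i z => exists b, Bc i b /\ z = F k (i, b)); split; [|split].
- move=> i j z hij [b [_ ->]] [b' [_ /ninj [e _]]]; exact: hij.
- exact: (union_coinf (F k) (fun i => proj1 (hBc i))).
- move=> i; rewrite /Phi /=.
  exact: (@supp_transport _ _ _ k _ (fun k0 => restr (F k0) i) (proj1 (hBc i)) (proj2 (hBc i))).
Qed.
Lemma part2 (y : elt) : inbox y -> exists a : dom X m, Phi a = y.
Proof.
move=> hy.
pose A k := proj1_sig (cid (hy k)).
have hA k : (forall i j a, i <> j -> A k i a -> A k j a -> False) /\ coinfinite (fun a => exists i, A k i a) /\ (forall i, supported (y i) k (A k i)).
  by rewrite /A; case: (cid _).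
pose ze k := enum (proj1 (proj2 (hA k))).
have zeU k t : ~ exists i, A k i (ze k t) by exact: (@enum_P _ (proj1 (proj2 (hA k))) t).
have zei k : injective (ze k) := @enum_inj _ (proj1 (proj2 (hA k))).
pose ff k (p : 'I_r * nat) := if em (~~ odd p.2 /\ A k p.1 p.2./2) then p.2./2 else ze k (idx p).
have ffi k : injective (ff k).
  move=> [i s] [j s']; rewrite /ff /=.
  case: (em _) => [[hs1 hs2]|hs]; case: (em _) => [[hs1' hs2']|hs'] /= e.
  - rewrite e in hs2.
    case: (classic (i = j)) => [eij|nij]; last by exfalso; exact: (proj1 (hA k) i j _ nij hs2 hs2').
    have hh := odd_double_half s; have hh' := odd_double_half s'.
    rewrite (negbTE hs1) (negbTE hs1') /= !add0n in hh hh'.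
    by rewrite eij -hh -hh' e.
  - by exfalso; apply: (zeU k (idx (j, s'))); exists i; rewrite -e.
  - by exfalso; apply: (zeU k (idx (i, s))); exists j; rewrite e.
  - by move/zei/idx_inj: e.
pose h i k := MInj (@dbl_inj (A k i)).
exists ((fun k => NInj (ffi k)), fun i => act (h i) (y i)).
apply: functional_extensionality_dep => i; rewrite /Phi /= act_comp; apply: act_fix => l.
exists (A l i); split; [|split].
- apply: coinf_sub (proj1 (proj2 (hA l))) _ => z hz; by exists i.
- exact: (proj2 (proj2 (hA l)) i).
- move=> z hz /=; rewrite /ff /=; case: (em (A l i z)) => //= _.
  case: (em _) => /= [_|hn]; first by rewrite doubleK.
  by exfalso; apply: hn; rewrite odd_double doubleK.
Qed.
End Parts.
Definition mkf r (s : nat -> nat) (T : 'I_r -> nat -> Prop) (c : 'I_r -> nat -> nat) (p : 'I_r * nat) :=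
  if em (T p.1 p.2) then p.2 else s (3 * idx p + c p.1 p.2).

Lemma mk_inj r (s : nat -> nat) (T : 'I_r -> nat -> Prop) (c : 'I_r -> nat -> nat) :
  injective s -> (forall i j z, T i z -> T j z -> i = j) -> (forall i z, c i z < 3) ->
  (forall i z j z', ~ T i z -> T j z' -> s (3 * idx (i, z) + c i z) <> z') ->
  injective (mkf s T c).
Proof.
move=> si hT hc hm [i z] [j z']; rewrite /mkf /=.
case: (em (T i z)) => hz; case: (em (T j z')) => hz' /= e.
- subst z'; by rewrite (hT _ _ _ hz hz').
- by exfalso; apply: (hm j z' i z hz' hz); rewrite -e.
- by exfalso; apply: (hm i z j z' hz hz').
- have e1 := si _ _ e; have := hc i z; have := hc j z'.
  move=> h1 h2; have e2 : idx (i, z) = idx (j, z') by lia.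
  exact: idx_inj e2.
Qed.

Section Main.
Variables (r : nat) (X : 'I_r -> EMsSet) (m : nat).
Local Notation Q := (@quotrel r X m).
Local Notation tup := ('I_m.+1 -> Ninj r).
Local Notation elt := (forall i : 'I_r, X i m).

Definition disjfam (S : 'I_r -> 'I_m.+1 -> nat -> Prop) := forall k i j z, S i k z -> S j k z -> i = j.
Definition ucoinf (S : 'I_r -> 'I_m.+1 -> nat -> Prop) := forall k, coinfinite (fun z => exists i, S i k z).
Definition idon (K : tup) (S : 'I_r -> 'I_m.+1 -> nat -> Prop) := forall k i z, S i k z -> K k (i, z) = z.

Lemma connect (y : elt) S S' (K K' : tup) :
  suppfam y S -> suppfam y S' -> disjfam S -> disjfam S' -> ucoinf S -> ucoinf S' ->
  idon K S -> idon K' S' -> Q (K, y) (K', y).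
Proof.
move=> hS hS' dS dS' uS uS' iK iK'.
pose Pt k t := if t %% 3 == 1 then (fun z => ~ exists i, S' i k z) else (fun z => ~ exists i, S i k z).
have hPt k t : unbounded (Pt k t) by rewrite /Pt; case: ifP => _; [exact: uS' | exact: uS].
pose s k := sq (hPt k).
have si k : injective (s k) := @sq_inj _ (hPt k).
have sv k n c : c < 3 -> (c = 1 -> ~ exists i, S' i k (s k (3 * n + c))) /\
                        (c <> 1 -> ~ exists i, S i k (s k (3 * n + c))).
  move=> hc; have := @sq_P _ (hPt k) (3 * n + c); rewrite /Pt.
  have -> : (3 * n + c) %% 3 = c by rewrite mulnC modnMDl modn_small.
  by case: eqP => [-> h|h1 h2]; split.
pose T0 k := fun i => S i k.
have K0i k : injective (mkf (s k) (T0 k) (fun _ _ => 0)).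
  apply: mk_inj => // [i j z h1 h2|i z j z' _ h]; first exact: dS h1 h2.
  move=> e; have [_ h2] := sv k (idx (i, z)) 0 isT; apply: h2 => //; exists j; by rewrite e.
pose T2 k := fun i => S' i k.
have G2i k : injective (mkf (s k) (T2 k) (fun _ _ => 1)).
  apply: mk_inj => // [i j z h1 h2|i z j z' _ h]; first exact: dS' h1 h2.
  move=> e; have [h2 _] := sv k (idx (i, z)) 1 isT; apply: h2 => //; exists j; by rewrite e.
pose T1 k := fun i z => S i k z /\ S' i k z.
pose c1 k := fun i z => if em (S' i k z) then 0 else if em (S i k z) then 1 else 2.
have G1i k : injective (mkf (s k) (T1 k) (c1 k)).
  apply: mk_inj => // [i j z [h1 _] [h2 _]|i z|i z j z' _ [h1 h2]]; first exact: dS h1 h2.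
    by rewrite /c1; case: (em _) => //= _; case: (em _).
  have hc : c1 k i z < 3 by rewrite /c1; case: (em _) => //= _; case: (em _).
  have [ha hb] := sv k (idx (i, z)) (c1 k i z) hc.
  move=> e; case: (eqVneq (c1 k i z) 1) => [/eqP|] hc1.
    by apply: ha; [exact/eqP | exists j; rewrite e].
  by apply: hb; [exact/eqP | exists j; rewrite e].
pose K0 k := NInj (K0i k). pose G1 k := NInj (G1i k). pose G2 k := NInj (G2i k).
apply: (@Qtrans _ _ _ _ (K0, y)).
  apply: (Nagree hS) => k i z hz; rewrite iK //= /mkf /=.
  by case: (em _).
apply: (@Qtrans _ _ _ _ (G1, y)).
  apply: (Nagree hS') => k i z hz /=; rewrite /mkf /= /T0 /T1 /c1.
  case: (em (S i k z)) => h1; case: (em (S i k z /\ S' i k z)) => h2 //=.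
  - by case: h2.
  - by case: h2.
  - by case: (em (S' i k z)).
apply: (@Qtrans _ _ _ _ (G2, y)).
  apply: (Nagree hS) => k i z hz /=; rewrite /mkf /= /T2 /T1 /c1.
  case: (em (S' i k z)) => h1; case: (em (S i k z /\ S' i k z)) => h2 //=.
  - by case: h2.
  - by case: h2.
  - by case: (em (S i k z)).
apply: (Nagree hS') => k i z hz /=; rewrite iK' // /mkf /= /T2.
by case: (em _).
Qed.

Hypothesis hm : forall i, mild (X i).

Lemma reduce (F : tup) (x : elt) : exists S : 'I_r -> 'I_m.+1 -> nat -> Prop, exists K : tup,
  suppfam (Phi ((F, x) : dom X m)) S /\ disjfam S /\ ucoinf S /\ idon K S /\
  Q (F, x) (K, Phi ((F, x) : dom X m)).
Proof.
pose y := Phi ((F, x) : dom X m).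
pose Bc i k := proj1_sig (cid (hm (x i) k)).
have hBc i k : coinfinite (Bc i k) /\ supported (x i) k (Bc i k) by rewrite /Bc; case: (cid _).
pose S i k z := exists b, Bc i k b /\ z = F k (i, b).
pose eB i k := enum (proj1 (hBc i k)).
have eBnB i k t : ~ Bc i k (eB i k t) by exact: (@enum_P _ (proj1 (hBc i k)) t).
have eBi i k : injective (eB i k) := @enum_inj _ (proj1 (hBc i k)).
pose vf i k z := match em (S i k z) with left h => proj1_sig (cid h) | right _ => eB i k z end.
have vinj i k : injective (vf i k).
  move=> z z'; rewrite /vf; case: (em (S i k z)) => h; case: (em (S i k z')) => h' /=.
  - case: (cid h) => b [hb ez]; case: (cid h') => b' [hb' ez'] /= e.
    by rewrite ez ez' e.
  - case: (cid h) => b [hb ez] /= e; by case: (eBnB i k z'); rewrite -e.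
  - case: (cid h') => b [hb ez] /= e; by case: (eBnB i k z); rewrite e.
  - exact: eBi.
pose V i k := MInj (vinj i k).
have VF i k b : Bc i k b -> V i k (F k (i, b)) = b.
  move=> hb; rewrite /= /vf; case: (em _) => [h|h] /=; last by exfalso; apply: h; exists b.
  by case: (cid h) => b' [hb' e] /=; have := ninj e; case.
have ex : (fun i => act (V i) (y i)) = x.
  apply: functional_extensionality_dep => i; rewrite /y /Phi /= act_comp; apply: act_fix => l.
  by exists (Bc i l); have [h1 h2] := hBc i l; split; [|split] => // z hz; exact: (VF i l z hz).
exists S, (fun k => ncomp (F k) (fun i => V i k)); split; [|split; [|split; [|split]]].
- move=> i k; split.
    exact: (coinf_image (@restr_inj _ (F k) i) (proj1 (hBc i k))).
  exact: (@supp_transport _ _ _ k _ (fun k0 => restr (F k0) i) (proj1 (hBc i k)) (proj2 (hBc i k))).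
- by move=> k i j z [b [_ ->]] [b' [_ /ninj [e _]]].
- move=> k; exact: (union_coinf (F k) (fun i => proj1 (hBc i k))).
- move=> k i z [b [hb ->]]; change (F k (i, V i k (F k (i, b))) = F k (i, b)); by rewrite VF.
- by have := genrel_q F V y; rewrite ex.
Qed.

End Main.

Theorem theorem2p25 (r : nat) (X : 'I_r -> EMsSet) :
  (forall i, mild (X i)) ->
  forall m : nat,
    (forall a : dom X m, inbox (Phi a)) /\
    (forall y : (forall i : 'I_r, X i m), inbox y -> exists a : dom X m, Phi a = y) /\
    (forall a b : dom X m, Phi a = Phi b <-> quotrel a b).
Proof.
move=> hm m; split; [|split].
- exact: part1.
- exact: part2.
- move=> [F x] [F' x']; split; last exact: Phi_quot.
  move=> e.
  have [S [K [h1 [h2 [h3 [h4 h5]]]]]] := reduce hm F x.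
  have [S' [K' [h1' [h2' [h3' [h4' h5']]]]]] := reduce hm F' x'.
  rewrite -e in h1' h5'.
  apply: Qtrans h5 _; apply: Qtrans (Qsym h5'); exact: connect h1 h1' h2 h2' h3 h3' h4 h4'.
Qed.
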